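(* Let $(F,\phi):\mathcal B\to\mathcal C$ be a fibration and $(G,\gamma):\mathcal D\to\mathcal C$ any morphism of bigroupoids. Then a pullback of $(F,\phi)$ along $(G,\gamma)$ exists in $\mathbf{Bigpd}$, i.e. there is a commutative square $(F,\phi)\circ(R,\rho)=(G,\gamma)\circ(P,\pi)$ with $(R,\rho):\mathcal A\to\mathcal B$, $(P,\pi):\mathcal A\to\mathcal D$ which is universal among such commutative squares; moreover the projection $(P,\pi):\mathcal A\to\mathcal D$ can be chosen strict ($\pi=\mathrm{id}$).
   Context: A bigroupoid $\mathcal B$ consists of: a set $\mathcal B_0$ of 0-cells; for each $A,B\in\mathcal B_0$ a groupoid $\mathcal B(A,B)$ whose objects are 1-cells and whose arrows are 2-cells; composition functors $*$; identity 1-cells $1_A$; inversion functors $(-)^*:\mathcal B(A,B)\to\mathcal B(B,A)$; and natural isomorphisms $\mathbf a:(h*g)*f\Rightarrow h*(g*f)$, $\mathbf l:1_B*f\Rightarrow f$, $\mathbf r:f*1_A\Rightarrow f$, $\mathbf e:f^**f\Rightarrow 1_A$, $\mathbf i:1_B\Rightarrow f*f^*$, such that the pentagon for $\mathbf a$ commutes, $(\mathrm{id}*\mathbf l)\circ\mathbf a=\mathbf r*\mathrm{id}$, and $\mathbf r_f\circ(\mathrm{id}*\mathbf e_f)\circ\mathbf a\circ(\mathbf i_f*\mathrm{id})=\mathbf l_f$. A morphism $(F,\phi):\mathcal A\to\mathcal B$ consists of a function on 0-cells, functors $F_{A,A'}:\mathcal A(A,A')\to\mathcal B(FA,FA')$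 and natural isomorphisms $\phi_{g,f}:Fg*Ff\Rightarrow F(g*f)$, $\phi_A:1_{FA}\Rightarrow F1_A$, $\phi_f:(Ff)^*\Rightarrow F(f^* )$ satisfying $F\mathbf a\circ\phi\circ(\phi*\mathrm{id})=\phi\circ(\mathrm{id}*\phi)\circ\mathbf a$, $F\mathbf r\circ\phi\circ(\mathrm{id}*\phi_A)=\mathbf r$, $F\mathbf l\circ\phi\circ(\phi_B*\mathrm{id})=\mathbf l$, $F\mathbf e\circ\phi\circ(\phi_f*\mathrm{id})=\phi_A\circ\mathbf e$, $F\mathbf i\circ\phi_B=\phi\circ(\mathrm{id}*\phi_f)\circ\mathbf i$; strict if all components of $\phi$ are identities; composition is $(G,\gamma)\circ(F,\phi)=(GF,G\phi\circ\gamma F)$, and equality of morphisms means equality of all data. $\mathbf{Bigpd}$ is the category of small bigroupoids and morphisms. Fibration: (1) for every 0-cell $A'$ of $\mathcal A$ and 1-cell $b:B\to FA'$ there is $a:A\to A'$ with $FA=B$, $Fa=b$; (2) for every 1-cell $a'$ and 2-cell $\beta:b\Rightarrow Fa'$ there is $\alpha:a\Rightarrow a'$ with $Fa=b$, $F\alpha=\beta$. *)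

(* Defs.v *)
From Stdlib Require Import Classical ProofIrrelevance FunctionalExtensionality.

Record BgData : Type := {
  b0 : Type;
  b1 : b0 -> b0 -> Type;
  b2 : forall x y, b1 x y -> b1 x y -> Type;
  vc : forall x y (f g h : b1 x y), b2 x y g h -> b2 x y f g -> b2 x y f h;
  vi : forall x y (f : b1 x y), b2 x y f f;
  vinv : forall x y (f g : b1 x y), b2 x y f g -> b2 x y g f;
  hc : forall x y z, b1 y z -> b1 x y -> b1 x z;
  hc2 : forall x y z (g g' : b1 y z) (f f' : b1 x y),
          b2 y z g g' -> b2 x y f f' -> b2 x z (hc x y z g f) (hc x y z g' f');
  one : forall x, b1 x x;
  inv : forall x y, b1 x y -> b1 y x;
  inv2 : forall x y (f g : b1 x y), b2 x y f g -> b2 y x (inv x y f) (inv x y g);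
  asc : forall w x y z (h : b1 y z) (g : b1 x y) (f : b1 w x),
          b2 w z (hc w x z (hc x y z h g) f) (hc w y z h (hc w x y g f));
  lu : forall x y (f : b1 x y), b2 x y (hc x y y (one y) f) f;
  ru : forall x y (f : b1 x y), b2 x y (hc x x y f (one x)) f;
  ev : forall x y (f : b1 x y), b2 x x (hc x y x (inv x y f) f) (one x);
  co : forall x y (f : b1 x y), b2 y y (one y) (hc y x y f (inv x y f))
}.

Arguments b1 {b} x y.
Arguments b2 {b x y} f g.
Arguments vc {b x y f g h} _ _.
Arguments vi {b x y} f.
Arguments vinv {b x y f g} _.
Arguments hc {b x y z} _ _.
Arguments hc2 {b x y z g g' f f'} _ _.
Arguments one {b} x.
Arguments inv {b x y} _.
Arguments inv2 {b x y f g} _.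
Arguments asc {b w x y z} h g f.
Arguments lu {b x y} f.
Arguments ru {b x y} f.
Arguments ev {b x y} f.
Arguments co {b x y} f.

Record BgLaws (B : BgData) : Prop := {
  vc_assoc : forall (x y : b0 B) (f g h k : b1 x y) (c : b2 h k) (b : b2 g h) (a : b2 f g),
      vc c (vc b a) = vc (vc c b) a;
  vc_idl : forall (x y : b0 B) (f g : b1 x y) (a : b2 f g), vc (vi g) a = a;
  vc_idr : forall (x y : b0 B) (f g : b1 x y) (a : b2 f g), vc a (vi f) = a;
  vinv_l : forall (x y : b0 B) (f g : b1 x y) (a : b2 f g), vc (vinv a) a = vi f;
  vinv_r : forall (x y : b0 B) (f g : b1 x y) (a : b2 f g), vc a (vinv a) = vi g;
  hc2_comp : forall (x y z : b0 B) (g g' g'' : b1 y z) (f f' f'' : b1 x y)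
      (b : b2 g g') (b' : b2 g' g'') (a : b2 f f') (a' : b2 f' f''),
      hc2 (vc b' b) (vc a' a) = vc (hc2 b' a') (hc2 b a);
  hc2_id : forall (x y z : b0 B) (g : b1 y z) (f : b1 x y), hc2 (vi g) (vi f) = vi (hc g f);
  inv2_comp : forall (x y : b0 B) (f g h : b1 x y) (b : b2 g h) (a : b2 f g),
      inv2 (vc b a) = vc (inv2 b) (inv2 a);
  inv2_id : forall (x y : b0 B) (f : b1 x y), inv2 (vi f) = vi (inv f);
  asc_nat : forall (w x y z : b0 B) (h h' : b1 y z) (g g' : b1 x y) (f f' : b1 w x)
      (c : b2 h h') (b : b2 g g') (a : b2 f f'),
      vc (asc h' g' f') (hc2 (hc2 c b) a) = vc (hc2 c (hc2 b a)) (asc h g f);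
  lu_nat : forall (x y : b0 B) (f f' : b1 x y) (a : b2 f f'),
      vc (lu f') (hc2 (vi (one y)) a) = vc a (lu f);
  ru_nat : forall (x y : b0 B) (f f' : b1 x y) (a : b2 f f'),
      vc (ru f') (hc2 a (vi (one x))) = vc a (ru f);
  ev_nat : forall (x y : b0 B) (f f' : b1 x y) (a : b2 f f'),
      vc (ev f') (hc2 (inv2 a) a) = ev f;
  co_nat : forall (x y : b0 B) (f f' : b1 x y) (a : b2 f f'),
      vc (hc2 a (inv2 a)) (co f) = co f';
  pentagon : forall (v w x y z : b0 B) (k : b1 y z) (h : b1 x y) (g : b1 w x) (f : b1 v w),
      vc (asc k h (hc g f)) (asc (hc k h) g f)
      = vc (hc2 (vi k) (asc h g f)) (vc (asc k (hc h g) f) (hc2 (asc k h g) (vi f)));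
  triangle : forall (x y z : b0 B) (g : b1 y z) (f : b1 x y),
      vc (hc2 (vi g) (lu f)) (asc g (one y) f) = hc2 (ru g) (vi f);
  ev_co : forall (x y : b0 B) (f : b1 x y),
      vc (ru f) (vc (hc2 (vi f) (ev f)) (vc (asc f (inv f) f) (hc2 (co f) (vi f)))) = lu f
}.

Record Bigroupoid : Type := { bdata :> BgData; blaws : BgLaws bdata }.

Record MorData (A B : BgData) : Type := {
  F0 : b0 A -> b0 B;
  F1 : forall x y, @b1 A x y -> @b1 B (F0 x) (F0 y);
  F2 : forall x y (f g : @b1 A x y), b2 f g -> b2 (F1 x y f) (F1 x y g);
  ph2 : forall x y z (g : @b1 A y z) (f : @b1 A x y),
      b2 (hc (F1 y z g) (F1 x y f)) (F1 x z (hc g f));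
  ph0 : forall x, b2 (one (F0 x)) (F1 x x (one x));
  ph1 : forall x y (f : @b1 A x y), b2 (inv (F1 x y f)) (F1 y x (inv f))
}.

Arguments F0 {A B} _ _.
Arguments F1 {A B} _ {x y} _.
Arguments F2 {A B} _ {x y f g} _.
Arguments ph2 {A B} _ {x y z} g f.
Arguments ph0 {A B} _ x.
Arguments ph1 {A B} _ {x y} f.

Record MorLaws {A B : BgData} (F : MorData A B) : Prop := {
  F2_comp : forall x y (f g h : @b1 A x y) (b : b2 g h) (a : b2 f g),
      F2 F (vc b a) = vc (F2 F b) (F2 F a);
  F2_id : forall x y (f : @b1 A x y), F2 F (vi f) = vi (F1 F f);
  ph2_nat : forall x y z (g g' : @b1 A y z) (f f' : @b1 A x y) (b : b2 g g') (a : b2 f f'),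
      vc (F2 F (hc2 b a)) (ph2 F g f) = vc (ph2 F g' f') (hc2 (F2 F b) (F2 F a));
  ph1_nat : forall x y (f f' : @b1 A x y) (a : b2 f f'),
      vc (F2 F (inv2 a)) (ph1 F f) = vc (ph1 F f') (inv2 (F2 F a));
  mor_asc : forall w x y z (h : @b1 A y z) (g : @b1 A x y) (f : @b1 A w x),
      vc (F2 F (asc h g f)) (vc (ph2 F (hc h g) f) (hc2 (ph2 F h g) (vi (F1 F f))))
      = vc (ph2 F h (hc g f)) (vc (hc2 (vi (F1 F h)) (ph2 F g f)) (asc (F1 F h) (F1 F g) (F1 F f)));
  mor_ru : forall x y (f : @b1 A x y),
      vc (F2 F (ru f)) (vc (ph2 F f (one x)) (hc2 (vi (F1 F f)) (ph0 F x))) = ru (F1 F f);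
  mor_lu : forall x y (f : @b1 A x y),
      vc (F2 F (lu f)) (vc (ph2 F (one y) f) (hc2 (ph0 F y) (vi (F1 F f)))) = lu (F1 F f);
  mor_ev : forall x y (f : @b1 A x y),
      vc (F2 F (ev f)) (vc (ph2 F (inv f) f) (hc2 (ph1 F f) (vi (F1 F f))))
      = vc (ph0 F x) (ev (F1 F f));
  mor_co : forall x y (f : @b1 A x y),
      vc (F2 F (co f)) (ph0 F y)
      = vc (ph2 F f (inv f)) (vc (hc2 (vi (F1 F f)) (ph1 F f)) (co (F1 F f)))
}.

Definition mcomp {A B C : BgData} (G : MorData B C) (F : MorData A B) : MorData A C :=
  {| F0 := fun x => F0 G (F0 F x);
     F1 := fun x y f => F1 G (F1 F f);
     F2 := fun x y f g a => F2 G (F2 F a);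
     ph2 := fun x y z g f => vc (F2 G (ph2 F g f)) (ph2 G (F1 F g) (F1 F f));
     ph0 := fun x => vc (F2 G (ph0 F x)) (ph0 G (F0 F x));
     ph1 := fun x y f => vc (F2 G (ph1 F f)) (ph1 G (F1 F f)) |}.

Definition is_id {B : BgData} {x y} {f g : @b1 B x y} (c : b2 f g) : Prop :=
  exists p : f = g, c = eq_rect f (fun g' => b2 f g') (vi f) g p.

Definition strict {A B : BgData} (F : MorData A B) : Prop :=
  (forall x y z (g : @b1 A y z) (f : @b1 A x y), is_id (ph2 F g f)) /\
  (forall x, is_id (ph0 F x)) /\
  (forall x y (f : @b1 A x y), is_id (ph1 F f)).

Definition is_fibration {A B : BgData} (F : MorData A B) : Prop :=
  (forall (A' : b0 A) (Bo : b0 B) (b : @b1 B Bo (F0 F A')),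
      exists (Ao : b0 A) (a : @b1 A Ao A') (p : F0 F Ao = Bo),
        eq_rect (F0 F Ao) (fun X => @b1 B X (F0 F A')) (F1 F a) Bo p = b) /\
  (forall x y (a' : @b1 A x y) (b : @b1 B (F0 F x) (F0 F y)) (beta : b2 b (F1 F a')),
      exists (a : @b1 A x y) (p : F1 F a = b) (alpha : b2 a a'),
        eq_rect (F1 F a) (fun u => b2 u (F1 F a')) (F2 F alpha) b p = beta).

(* Main.v *)
Require Import Defs.
From Stdlib Require Import Classical ProofIrrelevance FunctionalExtensionality ClassicalEpsilon Eqdep.

Existing Class BgLaws.
Existing Class MorLaws.

Section Alg.
Context {X : BgData} `{L : BgLaws X}.

Lemma vcA {x y : b0 X} {f g h k : b1 x y} (c : b2 h k) (b : b2 g h) (a : b2 f g) :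
  vc c (vc b a) = vc (vc c b) a.
Proof. apply (vc_assoc _ L). Qed.
Lemma vc1l {x y : b0 X} {f g : b1 x y} (a : b2 f g) : vc (vi g) a = a.
Proof. apply (vc_idl _ L). Qed.
Lemma vc1r {x y : b0 X} {f g : b1 x y} (a : b2 f g) : vc a (vi f) = a.
Proof. apply (vc_idr _ L). Qed.
Lemma vVl {x y : b0 X} {f g : b1 x y} (a : b2 f g) : vc (vinv a) a = vi f.
Proof. apply (vinv_l _ L). Qed.
Lemma vVr {x y : b0 X} {f g : b1 x y} (a : b2 f g) : vc a (vinv a) = vi g.
Proof. apply (vinv_r _ L). Qed.
Lemma hcC {x y z : b0 X} {g g' g'' : b1 y z} {f f' f'' : b1 x y}
  (b : b2 g g') (b' : b2 g' g'') (a : b2 f f') (a' : b2 f' f'') :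
  hc2 (vc b' b) (vc a' a) = vc (hc2 b' a') (hc2 b a).
Proof. apply (hc2_comp _ L). Qed.
Lemma hc11 {x y z : b0 X} (g : b1 y z) (f : b1 x y) : hc2 (vi g) (vi f) = vi (hc g f).
Proof. apply (hc2_id _ L). Qed.
Lemma inC {x y : b0 X} {f g h : b1 x y} (b : b2 g h) (a : b2 f g) :
  inv2 (vc b a) = vc (inv2 b) (inv2 a).
Proof. apply (inv2_comp _ L). Qed.
Lemma in1 {x y : b0 X} (f : b1 x y) : inv2 (vi f) = vi (inv f).
Proof. apply (inv2_id _ L). Qed.

Lemma vVl' {x y : b0 X} {f g h : b1 x y} (a : b2 f g) (c : b2 h f) : vc (vinv a) (vc a c) = c.
Proof. rewrite vcA, vVl, vc1l. reflexivity. Qed.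
Lemma vVr' {x y : b0 X} {f g h : b1 x y} (a : b2 f g) (c : b2 h g) : vc a (vc (vinv a) c) = c.
Proof. rewrite vcA, vVr, vc1l. reflexivity. Qed.

Lemma inv_uniq {x y : b0 X} {f g : b1 x y} (a : b2 f g) (b : b2 g f) : vc b a = vi f -> b = vinv a.
Proof. intro E. rewrite <- (vc1r b), <- (vVr a), vcA, E, vc1l. reflexivity. Qed.
Lemma inv_uniq' {x y : b0 X} {f g : b1 x y} (a : b2 f g) (b : b2 g f) : vc a b = vi g -> b = vinv a.
Proof. intro E. rewrite <- (vc1l b), <- (vVl a), <- vcA, E, vc1r. reflexivity. Qed.
Lemma vinvK {x y : b0 X} {f g : b1 x y} (a : b2 f g) : vinv (vinv a) = a.
Proof. symmetry. apply inv_uniq. apply vVr. Qed.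
Lemma vinv1 {x y : b0 X} (f : b1 x y) : vinv (vi f) = vi f.
Proof. symmetry. apply inv_uniq. apply vc1l. Qed.
Lemma vinvC {x y : b0 X} {f g h : b1 x y} (b : b2 g h) (a : b2 f g) :
  vinv (vc b a) = vc (vinv a) (vinv b).
Proof. symmetry. apply inv_uniq. rewrite vcA, <- (vcA (vinv a)), vVl, vc1r, vVl. reflexivity. Qed.
Lemma hcV {x y z : b0 X} {g g' : b1 y z} {f f' : b1 x y} (b : b2 g g') (a : b2 f f') :
  hc2 (vinv b) (vinv a) = vinv (hc2 b a).
Proof. apply inv_uniq. rewrite <- hcC, !vVl, hc11. reflexivity. Qed.
Lemma inV {x y : b0 X} {f g : b1 x y} (a : b2 f g) : inv2 (vinv a) = vinv (inv2 a).
Proof. apply inv_uniq. rewrite <- inC, vVl, in1. reflexivity. Qed.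
Lemma hcCl {x y z : b0 X} {g g' g'' : b1 y z} (f : b1 x y) (b : b2 g g') (b' : b2 g' g'') :
  hc2 (vc b' b) (vi f) = vc (hc2 b' (vi f)) (hc2 b (vi f)).
Proof. rewrite <- hcC, vc1l. reflexivity. Qed.
Lemma hcCr {x y z : b0 X} (g : b1 y z) {f f' f'' : b1 x y} (a : b2 f f') (a' : b2 f' f'') :
  hc2 (vi g) (vc a' a) = vc (hc2 (vi g) a') (hc2 (vi g) a).
Proof. rewrite <- hcC, vc1l. reflexivity. Qed.
Lemma hcX {x y z : b0 X} {g g' : b1 y z} {f f' : b1 x y} (b : b2 g g') (a : b2 f f') :
  vc (hc2 b (vi f')) (hc2 (vi g) a) = vc (hc2 (vi g') a) (hc2 b (vi f)).
Proof. rewrite <- !hcC, !vc1l, !vc1r. reflexivity. Qed.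

Lemma mv_l {x y : b0 X} {f g h : b1 x y} (a : b2 f g) (c : b2 g h) (d : b2 f h) :
  c = vc d (vinv a) -> vc c a = d.
Proof. intro E; subst. rewrite <- vcA, vVl, vc1r. reflexivity. Qed.
Lemma mv_r {x y : b0 X} {f g h : b1 x y} (a : b2 g h) (c : b2 f g) (d : b2 f h) :
  c = vc (vinv a) d -> vc a c = d.
Proof. intro E; subst. apply vVr'. Qed.
Lemma vc_cancel_l {x y : b0 X} {f g h : b1 x y} (a : b2 g h) (c d : b2 f g) :
  vc a c = vc a d -> c = d.
Proof. intro E. rewrite <- (vVl' a c), E, vVl'. reflexivity. Qed.
Lemma vc_cancel_r {x y : b0 X} {f g h : b1 x y} (a : b2 f g) (c d : b2 g h) :
  vc c a = vc d a -> c = d.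
Proof. intro E. rewrite <- (vc1r c), <- (vVr a), vcA, E, <- vcA, vVr, vc1r. reflexivity. Qed.

Lemma ascN {w x y z : b0 X} {h h' : b1 y z} {g g' : b1 x y} {f f' : b1 w x}
  (c : b2 h h') (b : b2 g g') (a : b2 f f') :
  vc (asc h' g' f') (hc2 (hc2 c b) a) = vc (hc2 c (hc2 b a)) (asc h g f).
Proof. apply (asc_nat _ L). Qed.
Lemma luN {x y : b0 X} {f f' : b1 x y} (a : b2 f f') : vc (lu f') (hc2 (vi (one y)) a) = vc a (lu f).
Proof. apply (lu_nat _ L). Qed.
Lemma ruN {x y : b0 X} {f f' : b1 x y} (a : b2 f f') : vc (ru f') (hc2 a (vi (one x))) = vc a (ru f).
Proof. apply (ru_nat _ L). Qed.
Lemma evN {x y : b0 X} {f f' : b1 x y} (a : b2 f f') : vc (ev f') (hc2 (inv2 a) a) = ev f.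
Proof. apply (ev_nat _ L). Qed.
Lemma coN {x y : b0 X} {f f' : b1 x y} (a : b2 f f') : vc (hc2 a (inv2 a)) (co f) = co f'.
Proof. apply (co_nat _ L). Qed.

End Alg.


Section Alg2.
Context {X : BgData} `{L : BgLaws X}.
Lemma hcM {x y z : b0 X} {g g' g'' : b1 y z} {f f' f'' : b1 x y} {k : b1 x z}
  (b : b2 g g') (b' : b2 g' g'') (a : b2 f f') (a' : b2 f' f'') (c : b2 k (hc g f)) :
  vc (hc2 b' a') (vc (hc2 b a) c) = vc (hc2 (vc b' b) (vc a' a)) c.
Proof. rewrite vcA, hcC. reflexivity. Qed.
Lemma hcSl {x y z : b0 X} {g g' g'' : b1 y z} {f f' : b1 x y}
  (b : b2 g g') (b' : b2 g' g'') (a : b2 f f') :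
  hc2 (vc b' b) a = vc (hc2 b' a) (hc2 b (vi f)).
Proof. rewrite <- hcC, vc1r. reflexivity. Qed.
Lemma hcSr {x y z : b0 X} {g g' : b1 y z} {f f' f'' : b1 x y}
  (b : b2 g g') (a : b2 f f') (a' : b2 f' f'') :
  hc2 b (vc a' a) = vc (hc2 b a') (hc2 (vi g) a).
Proof. rewrite <- hcC, vc1r. reflexivity. Qed.
Lemma ascN' {w x y z : b0 X} {h h' : b1 y z} {g g' : b1 x y} {f f' : b1 w x} {k}
  (c : b2 h h') (b : b2 g g') (a : b2 f f') (d : b2 k _) :
  vc (asc h' g' f') (vc (hc2 (hc2 c b) a) d) = vc (hc2 c (hc2 b a)) (vc (asc h g f) d).
Proof. rewrite !vcA, ascN. reflexivity. Qed.
End Alg2.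

Ltac simp := repeat (rewrite <- vcA || rewrite vVl' || rewrite vVr' || rewrite vVl || rewrite vVr
  || rewrite vc1l || rewrite vc1r || rewrite vinvK || rewrite vinv1).


Section Alg3.
Context {X : BgData} `{L : BgLaws X}.
Lemma RF {x y : b0 X} {e f g g' h : b1 x y} (p : b2 g h) (q : b2 f g) (r : b2 g' h) (s : b2 f g')
  (E : vc p q = vc r s) (d : b2 e f) : vc p (vc q d) = vc r (vc s d).
Proof. rewrite !vcA, E. reflexivity. Qed.
Lemma RF1 {x y : b0 X} {e f g h : b1 x y} (p : b2 g h) (q : b2 f g) (r : b2 f h)
  (E : vc p q = r) (d : b2 e f) : vc p (vc q d) = vc r d.
Proof. rewrite vcA, E. reflexivity. Qed.
Lemma hcD {x y z : b0 X} {g g' : b1 y z} {f f' : b1 x y} (b : b2 g g') (a : b2 f f') :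
  hc2 b a = vc (hc2 (vi g') a) (hc2 b (vi f)).
Proof. rewrite <- hcC, vc1l, vc1r. reflexivity. Qed.
Lemma hcD' {x y z : b0 X} {g g' : b1 y z} {f f' : b1 x y} (b : b2 g g') (a : b2 f f') :
  hc2 b a = vc (hc2 b (vi f')) (hc2 (vi g) a).
Proof. rewrite <- hcC, vc1l, vc1r. reflexivity. Qed.
Lemma hcSl' {x y z : b0 X} {g g' g'' : b1 y z} {f f' : b1 x y}
  (b : b2 g g') (b' : b2 g' g'') (a : b2 f f') :
  hc2 (vc b' b) a = vc (hc2 b' (vi f')) (hc2 b a).
Proof. rewrite <- hcC, vc1l. reflexivity. Qed.
Lemma hcSr' {x y z : b0 X} {g g' : b1 y z} {f f' f'' : b1 x y}
  (b : b2 g g') (a : b2 f f') (a' : b2 f' f'') :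
  hc2 b (vc a' a) = vc (hc2 (vi g') a') (hc2 b a).
Proof. rewrite <- hcC, vc1l. reflexivity. Qed.
End Alg3.

Section MorAlg.
Context {A B : BgData} `{LA : BgLaws A} `{LB : BgLaws B} (M : MorData A B) `{LM : MorLaws A B M}.
Lemma FC {x y : b0 A} {f g h : b1 x y} (b : b2 g h) (a : b2 f g) : F2 M (vc b a) = vc (F2 M b) (F2 M a).
Proof. apply (F2_comp _ LM). Qed.
Lemma F1i {x y : b0 A} (f : b1 x y) : F2 M (vi f) = vi (F1 M f).
Proof. apply (F2_id _ LM). Qed.
Lemma FV {x y : b0 A} {f g : b1 x y} (a : b2 f g) : F2 M (vinv a) = vinv (F2 M a).
Proof. apply inv_uniq. rewrite <- FC, vVl, F1i. reflexivity. Qed.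
Lemma phN {x y z : b0 A} {g g' : b1 y z} {f f' : b1 x y} (b : b2 g g') (a : b2 f f') :
  vc (F2 M (hc2 b a)) (ph2 M g f) = vc (ph2 M g' f') (hc2 (F2 M b) (F2 M a)).
Proof. apply (ph2_nat _ LM). Qed.
Lemma ph1N {x y : b0 A} {f f' : b1 x y} (a : b2 f f') :
  vc (F2 M (inv2 a)) (ph1 M f) = vc (ph1 M f') (inv2 (F2 M a)).
Proof. apply (ph1_nat _ LM). Qed.

Lemma phN' {x y z : b0 A} {g g' : b1 y z} {f f' : b1 x y} (b : b2 g g') (a : b2 f f') :
  F2 M (hc2 b a) = vc (ph2 M g' f') (vc (hc2 (F2 M b) (F2 M a)) (vinv (ph2 M g f))).
Proof. apply (vc_cancel_r (ph2 M g f)). rewrite phN. simp. reflexivity. Qed.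
Lemma ph1N' {x y : b0 A} {f f' : b1 x y} (a : b2 f f') :
  F2 M (inv2 a) = vc (ph1 M f') (vc (inv2 (F2 M a)) (vinv (ph1 M f))).
Proof. apply (vc_cancel_r (ph1 M f)). rewrite ph1N. simp. reflexivity. Qed.
Lemma ascF {w x y z : b0 A} (h : b1 y z) (g : b1 x y) (f : b1 w x) :
  F2 M (asc h g f) = vc (ph2 M h (hc g f)) (vc (hc2 (vi (F1 M h)) (ph2 M g f)) (vc (asc _ _ _)
     (vc (vinv (hc2 (ph2 M h g) (vi (F1 M f)))) (vinv (ph2 M (hc h g) f))))).
Proof. apply (vc_cancel_r (vc (ph2 M (hc h g) f) (hc2 (ph2 M h g) (vi (F1 M f))))).
  rewrite (mor_asc _ LM). rewrite ?vinvC. simp. reflexivity. Qed.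
Lemma luF {x y : b0 A} (f : b1 x y) :
  F2 M (lu f) = vc (lu _) (vc (vinv (hc2 (ph0 M y) (vi (F1 M f)))) (vinv (ph2 M (one y) f))).
Proof. apply (vc_cancel_r (vc (ph2 M (one y) f) (hc2 (ph0 M y) (vi (F1 M f))))).
  rewrite (mor_lu _ LM). rewrite ?vinvC. simp. reflexivity. Qed.
Lemma ruF {x y : b0 A} (f : b1 x y) :
  F2 M (ru f) = vc (ru _) (vc (vinv (hc2 (vi (F1 M f)) (ph0 M x))) (vinv (ph2 M f (one x)))).
Proof. apply (vc_cancel_r (vc (ph2 M f (one x)) (hc2 (vi (F1 M f)) (ph0 M x)))).
  rewrite (mor_ru _ LM). rewrite ?vinvC. simp. reflexivity. Qed.
Lemma evF {x y : b0 A} (f : b1 x y) :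
  F2 M (ev f) = vc (ph0 M x) (vc (ev _) (vc (vinv (hc2 (ph1 M f) (vi (F1 M f)))) (vinv (ph2 M (inv f) f)))).
Proof. apply (vc_cancel_r (vc (ph2 M (inv f) f) (hc2 (ph1 M f) (vi (F1 M f))))).
  rewrite (mor_ev _ LM). rewrite ?vinvC. simp. reflexivity. Qed.
Lemma coF {x y : b0 A} (f : b1 x y) :
  F2 M (co f) = vc (ph2 M f (inv f)) (vc (hc2 (vi (F1 M f)) (ph1 M f)) (vc (co _) (vinv (ph0 M y)))).
Proof. apply (vc_cancel_r (ph0 M y)).
  rewrite (mor_co _ LM). simp. reflexivity. Qed.
End MorAlg.

Definition heq1 {X : BgData} {x y x' y' : b0 X} (u : b1 x y) (v : b1 x' y') : Prop :=
  existT (fun p : b0 X * b0 X => b1 (fst p) (snd p)) (x, y) u = existT _ (x', y') v.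

Definition I2 (X : BgData) := {p : b0 X * b0 X & (b1 (fst p) (snd p) * b1 (fst p) (snd p))%type}.

Definition heq2 {X : BgData} {x y x' y' : b0 X} {f g : b1 x y} {f' g' : b1 x' y'}
  (a : b2 f g) (a' : b2 f' g') : Prop :=
  existT (fun s : I2 X => b2 (fst (projT2 s)) (snd (projT2 s)))
    (existT _ (x, y) (f, g)) a = existT _ (existT _ (x', y') (f', g')) a'.

Ltac inv1 H :=
  let e := fresh "e" in
  pose proof (f_equal (@projT1 _ _) H) as e; simpl in e;
  first [injection e; clear e; intros; subst | clear e];
  apply inj_pair2 in H; subst.

Ltac inv2 H :=
  let e := fresh "e" in let e' := fresh "e" in
  pose proof (f_equal (@projT1 _ _) H) as e; simpl in e;
  pose proof (f_equal (@projT1 _ _) e) as e'; simpl in e';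
  first [injection e'; clear e'; intros; subst | clear e'];
  apply inj_pair2 in e; first [injection e; clear e; intros; subst | clear e];
  apply inj_pair2 in H; subst.

Section Heq.
Context {X : BgData}.
Lemma heq1_eq {x y : b0 X} (u v : b1 x y) : heq1 u v -> u = v.
Proof. intro H. inv1 H. reflexivity. Qed.
Lemma heq2_eq {x y : b0 X} {f g : b1 x y} (a a' : b2 f g) : heq2 a a' -> a = a'.
Proof. intro H. inv2 H. reflexivity. Qed.
Lemma heq2_of_eq {x y : b0 X} {f g : b1 x y} (a a' : b2 f g) : a = a' -> heq2 a a'.
Proof. intro H. subst. reflexivity. Qed.
Lemma heq1_refl {x y : b0 X} (u : b1 x y) : heq1 u u. Proof. reflexivity. Qed.
Lemma heq2_src {x y x' y' : b0 X} {f g : b1 x y} {f' g' : b1 x' y'} (a : b2 f g) (a' : b2 f' g') :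
  heq2 a a' -> heq1 f f'.
Proof. intro H. inv2 H. reflexivity. Qed.
Lemma heq2_tgt {x y x' y' : b0 X} {f g : b1 x y} {f' g' : b1 x' y'} (a : b2 f g) (a' : b2 f' g') :
  heq2 a a' -> heq1 g g'.
Proof. intro H. inv2 H. reflexivity. Qed.
Lemma heq1_x {x y x' y' : b0 X} (u : b1 x y) (v : b1 x' y') : heq1 u v -> x = x'.
Proof. intro H. inv1 H. reflexivity. Qed.
Lemma heq1_y {x y x' y' : b0 X} (u : b1 x y) (v : b1 x' y') : heq1 u v -> y = y'.
Proof. intro H. inv1 H. reflexivity. Qed.

Lemma heq2_vc {x y x' y' : b0 X} {f g h : b1 x y} {f' g' h' : b1 x' y'}
  (b : b2 g h) (a : b2 f g) (b' : b2 g' h') (a' : b2 f' g') :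
  heq2 b b' -> heq2 a a' -> heq2 (vc b a) (vc b' a').
Proof. intros H1 H2. inv2 H2. inv2 H1. reflexivity. Qed.
Lemma heq2_vi {x y x' y' : b0 X} (f : b1 x y) (f' : b1 x' y') : heq1 f f' -> heq2 (vi f) (vi f').
Proof. intros H. inv1 H. reflexivity. Qed.
Lemma heq2_vinv {x y x' y' : b0 X} {f g : b1 x y} {f' g' : b1 x' y'} (a : b2 f g) (a' : b2 f' g') :
  heq2 a a' -> heq2 (vinv a) (vinv a').
Proof. intros H. inv2 H. reflexivity. Qed.
Lemma heq1_hc {x y z x' y' z' : b0 X} (g : b1 y z) (f : b1 x y) (g' : b1 y' z') (f' : b1 x' y') :
  heq1 g g' -> heq1 f f' -> heq1 (hc g f) (hc g' f').
Proof. intros H1 H2. inv1 H2. inv1 H1. reflexivity. Qed.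
Lemma heq2_hc2 {x y z x' y' z' : b0 X} {g1 g2 : b1 y z} {f1 f2 : b1 x y}
  {g1' g2' : b1 y' z'} {f1' f2' : b1 x' y'}
  (b : b2 g1 g2) (a : b2 f1 f2) (b' : b2 g1' g2') (a' : b2 f1' f2') :
  heq2 b b' -> heq2 a a' -> heq2 (hc2 b a) (hc2 b' a').
Proof. intros H1 H2. inv2 H2. inv2 H1. reflexivity. Qed.
Lemma heq1_one (x x' : b0 X) : x = x' -> heq1 (one x) (one x').
Proof. intros H. subst. reflexivity. Qed.
Lemma heq1_inv {x y x' y' : b0 X} (f : b1 x y) (f' : b1 x' y') : heq1 f f' -> heq1 (inv f) (inv f').
Proof. intros H. inv1 H. reflexivity. Qed.
Lemma heq2_inv2 {x y x' y' : b0 X} {f g : b1 x y} {f' g' : b1 x' y'} (a : b2 f g) (a' : b2 f' g') :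
  heq2 a a' -> heq2 (inv2 a) (inv2 a').
Proof. intros H. inv2 H. reflexivity. Qed.
Lemma heq2_asc {w x y z w' x' y' z' : b0 X} (h : b1 y z) (g : b1 x y) (f : b1 w x)
  (h' : b1 y' z') (g' : b1 x' y') (f' : b1 w' x') :
  heq1 h h' -> heq1 g g' -> heq1 f f' -> heq2 (asc h g f) (asc h' g' f').
Proof. intros H1 H2 H3. inv1 H3. inv1 H2. inv1 H1. reflexivity. Qed.
Lemma heq2_lu {x y x' y' : b0 X} (f : b1 x y) (f' : b1 x' y') : heq1 f f' -> heq2 (lu f) (lu f').
Proof. intros H. inv1 H. reflexivity. Qed.
Lemma heq2_ru {x y x' y' : b0 X} (f : b1 x y) (f' : b1 x' y') : heq1 f f' -> heq2 (ru f) (ru f').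
Proof. intros H. inv1 H. reflexivity. Qed.
Lemma heq2_ev {x y x' y' : b0 X} (f : b1 x y) (f' : b1 x' y') : heq1 f f' -> heq2 (ev f) (ev f').
Proof. intros H. inv1 H. reflexivity. Qed.
Lemma heq2_co {x y x' y' : b0 X} (f : b1 x y) (f' : b1 x' y') : heq1 f f' -> heq2 (co f) (co f').
Proof. intros H. inv1 H. reflexivity. Qed.
End Heq.

Ltac nrm := repeat rewrite <- vcA.

Section Transport.
Context {X : BgData} `{L : BgLaws X}.
Variable hc' : forall x y z : b0 X, b1 y z -> b1 x y -> b1 x z.
Variable rh : forall (x y z : b0 X) (g : b1 y z) (f : b1 x y), b2 (hc g f) (hc' x y z g f).
Variable one' : forall x : b0 X, b1 x x.
Variable r0 : forall x : b0 X, b2 (one x) (one' x).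
Variable inv' : forall x y : b0 X, b1 x y -> b1 y x.
Variable r1 : forall (x y : b0 X) (f : b1 x y), b2 (inv f) (inv' x y f).

Definition t_hc2 {x y z : b0 X} {g g' : b1 y z} {f f' : b1 x y} (b : b2 g g') (a : b2 f f')
  : b2 (hc' _ _ _ g f) (hc' _ _ _ g' f') :=
  vc (rh _ _ _ g' f') (vc (hc2 b a) (vinv (rh _ _ _ g f))).
Definition t_inv2 {x y : b0 X} {f g : b1 x y} (a : b2 f g) : b2 (inv' _ _ f) (inv' _ _ g) :=
  vc (r1 _ _ g) (vc (inv2 a) (vinv (r1 _ _ f))).
Definition t_asc {w x y z : b0 X} (h : b1 y z) (g : b1 x y) (f : b1 w x)
  : b2 (hc' _ _ _ (hc' _ _ _ h g) f) (hc' _ _ _ h (hc' _ _ _ g f)) :=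
  vc (rh _ _ _ h (hc' _ _ _ g f)) (vc (hc2 (vi h) (rh _ _ _ g f)) (vc (asc h g f)
    (vc (hc2 (vinv (rh _ _ _ h g)) (vi f)) (vinv (rh _ _ _ (hc' _ _ _ h g) f))))).
Definition t_lu {x y : b0 X} (f : b1 x y) : b2 (hc' _ _ _ (one' y) f) f :=
  vc (lu f) (vc (hc2 (vinv (r0 y)) (vi f)) (vinv (rh _ _ _ (one' y) f))).
Definition t_ru {x y : b0 X} (f : b1 x y) : b2 (hc' _ _ _ f (one' x)) f :=
  vc (ru f) (vc (hc2 (vi f) (vinv (r0 x))) (vinv (rh _ _ _ f (one' x)))).
Definition t_ev {x y : b0 X} (f : b1 x y) : b2 (hc' _ _ _ (inv' _ _ f) f) (one' x) :=
  vc (r0 x) (vc (ev f) (vc (hc2 (vinv (r1 _ _ f)) (vi f)) (vinv (rh _ _ _ (inv' _ _ f) f)))).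
Definition t_co {x y : b0 X} (f : b1 x y) : b2 (one' y) (hc' _ _ _ f (inv' _ _ f)) :=
  vc (rh _ _ _ f (inv' _ _ f)) (vc (hc2 (vi f) (r1 _ _ f)) (vc (co f) (vinv (r0 y)))).

Definition TData : BgData :=
  Build_BgData (b0 X) (@b1 X) (@b2 X) (@vc X) (@vi X) (@vinv X) hc'
    (fun x y z g g' f f' b a => t_hc2 b a) one' inv'
    (fun x y f g a => t_inv2 a)
    (fun w x y z h g f => t_asc h g f)
    (fun x y f => t_lu f) (fun x y f => t_ru f) (fun x y f => t_ev f) (fun x y f => t_co f).


Lemma T_hc2_comp : forall (x y z : b0 X) (g g' g'' : b1 y z) (f f' f'' : b1 x y)
      (b : b2 g g') (b' : b2 g' g'') (a : b2 f f') (a' : b2 f' f''),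
      t_hc2 (vc b' b) (vc a' a) = vc (t_hc2 b' a') (t_hc2 b a).
Proof. intros. unfold t_hc2. simp. rewrite hcM. reflexivity. Qed.

Lemma T_asc_nat : forall (w x y z : b0 X) (h h' : b1 y z) (g g' : b1 x y) (f f' : b1 w x)
      (c : b2 h h') (b : b2 g g') (a : b2 f f'),
      vc (t_asc h' g' f') (t_hc2 (t_hc2 c b) a) = vc (t_hc2 c (t_hc2 b a)) (t_asc h g f).
Proof. intros. unfold t_hc2, t_asc. simp.
  rewrite hcM. simp. rewrite hcSl. simp. rewrite ascN', hcM. simp.
  rewrite hcM. simp. reflexivity. Qed.

Lemma T_hc2_id : forall (x y z : b0 X) (g : b1 y z) (f : b1 x y), t_hc2 (vi g) (vi f) = vi (hc' _ _ _ g f).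
Proof. intros. unfold t_hc2. rewrite hc11. simp. reflexivity. Qed.
Lemma T_inv2_comp : forall (x y : b0 X) (f g h : b1 x y) (b : b2 g h) (a : b2 f g),
      t_inv2 (vc b a) = vc (t_inv2 b) (t_inv2 a).
Proof. intros. unfold t_inv2. rewrite inC. simp. reflexivity. Qed.
Lemma T_inv2_id : forall (x y : b0 X) (f : b1 x y), t_inv2 (vi f) = vi (inv' _ _ f).
Proof. intros. unfold t_inv2. rewrite in1. simp. reflexivity. Qed.
Lemma T_lu_nat : forall (x y : b0 X) (f f' : b1 x y) (a : b2 f f'),
      vc (t_lu f') (t_hc2 (vi (one' y)) a) = vc a (t_lu f).
Proof. intros. unfold t_lu, t_hc2. simp. rewrite hcM. simp.
  rewrite (hcD (vinv (r0 y)) a). simp. rewrite (RF _ _ _ _ (luN _)). reflexivity. Qed.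
Lemma T_ru_nat : forall (x y : b0 X) (f f' : b1 x y) (a : b2 f f'),
      vc (t_ru f') (t_hc2 a (vi (one' x))) = vc a (t_ru f).
Proof. intros. unfold t_ru, t_hc2. simp. rewrite hcM. simp.
  rewrite (hcD' a (vinv (r0 x))). simp. rewrite (RF _ _ _ _ (ruN _)). reflexivity. Qed.
Lemma T_ev_nat : forall (x y : b0 X) (f f' : b1 x y) (a : b2 f f'),
      vc (t_ev f') (t_hc2 (t_inv2 a) a) = t_ev f.
Proof. intros. unfold t_ev, t_hc2, t_inv2. simp. rewrite hcM. simp.
  rewrite hcSl. simp. rewrite (RF1 _ _ _ (evN _)). reflexivity. Qed.
Lemma T_co_nat : forall (x y : b0 X) (f f' : b1 x y) (a : b2 f f'),
      vc (t_hc2 a (t_inv2 a)) (t_co f) = t_co f'.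
Proof. intros. unfold t_co, t_hc2, t_inv2. simp. rewrite hcM. simp.
  rewrite hcSr'. simp. rewrite (RF1 _ _ _ (coN _)). reflexivity. Qed.

Lemma T_triangle : forall (x y z : b0 X) (g : b1 y z) (f : b1 x y),
      vc (t_hc2 (vi g) (t_lu f)) (t_asc g (one' y) f) = t_hc2 (t_ru g) (vi f).
Proof. intros. unfold t_hc2, t_lu, t_asc, t_ru. simp. rewrite hcM. simp.
  rewrite hcSr. simp.
  rewrite <- (RF _ _ _ _ (ascN (vi g) (vinv (r0 y)) (vi f))).
  rewrite (RF1 _ _ _ (triangle _ L _ _ _ g f)).
  rewrite !hcSl. simp. reflexivity. Qed.

Lemma evcoR {x y : b0 X} (f : b1 x y) {e} (d : b2 e _) :
  vc (ru f) (vc (hc2 (vi f) (ev f)) (vc (asc f (inv f) f) (vc (hc2 (co f) (vi f)) d))) = vc (lu f) d.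
Proof. rewrite <- (ev_co _ L _ _ f). simp. reflexivity. Qed.

Lemma T_ev_co : forall (x y : b0 X) (f : b1 x y),
      vc (t_ru f) (vc (t_hc2 (vi f) (t_ev f)) (vc (t_asc f (inv' _ _ f) f) (t_hc2 (t_co f) (vi f)))) = t_lu f.
Proof. intros. unfold t_hc2, t_lu, t_asc, t_ru, t_ev, t_co. simp.
  rewrite hcM. simp. rewrite hcM. simp. rewrite hcM. simp.
  rewrite hcSr. rewrite !hcSl. simp.
  rewrite (RF _ _ _ _ (ascN (vi f) (r1 _ _ f) (vi f))).
  rewrite (hcM (vi f) (vi f) (hc2 (r1 x y f) (vi f)) (hc2 (vinv (r1 x y f)) (vi f))).
  rewrite <- hcC. simp. rewrite !hc11. simp.
  rewrite evcoR. reflexivity. Qed.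

Lemma pentR {v w x y z : b0 X} (k : b1 y z) (h : b1 x y) (g : b1 w x) (f : b1 v w) {e} (d : b2 e _) :
  vc (hc2 (vi k) (asc h g f)) (vc (asc k (hc h g) f) (vc (hc2 (asc k h g) (vi f)) d))
  = vc (asc k h (hc g f)) (vc (asc (hc k h) g f) d).
Proof. rewrite !vcA, (pentagon _ L). simp. reflexivity. Qed.

Lemma hcCancel {w x y z : b0 X} (g : b1 y z) {f1 f2 : b1 x y} (b : b2 f1 f2) (f : b1 w x) {e} (d : b2 e _) :
  vc (hc2 (vi g) (hc2 (vinv b) (vi f))) (vc (hc2 (vi g) (hc2 b (vi f))) d) = d.
Proof. rewrite hcM, <- hcC, vVl, !vc1l, !hc11, vc1l. reflexivity. Qed.

Lemma T_pentagon : forall (v w x y z : b0 X) (k : b1 y z) (h : b1 x y) (g : b1 w x) (f : b1 v w),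
      vc (t_asc k h (hc' _ _ _ g f)) (t_asc (hc' _ _ _ k h) g f)
      = vc (t_hc2 (vi k) (t_asc h g f)) (vc (t_asc k (hc' _ _ _ h g) f) (t_hc2 (t_asc k h g) (vi f))).
Proof. intros. unfold t_hc2, t_asc. simp.
  symmetry. rewrite hcM. simp. rewrite hcM. simp. rewrite !hcSr, !hcSl. simp.
  rewrite (RF _ _ _ _ (ascN (vi k) (rh _ _ _ h g) (vi f))).
  rewrite hcCancel.
  rewrite pentR. symmetry.
  rewrite (RF _ _ _ _ (hcX (vinv (rh _ _ _ k h)) (rh _ _ _ g f))).
  rewrite <- (hc11 k h).
  rewrite (RF _ _ _ _ (ascN (vi k) (vi h) (rh _ _ _ g f))).
  rewrite <- (hc11 g f).
  rewrite <- (RF _ _ _ _ (ascN (vinv (rh _ _ _ k h)) (vi g) (vi f))).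
  reflexivity. Qed.

Lemma TLaws : BgLaws TData.
Proof.
  constructor; simpl.
  - intros; apply vcA.
  - intros; apply vc1l.
  - intros; apply vc1r.
  - intros; apply vVl.
  - intros; apply vVr.
  - apply T_hc2_comp.
  - apply T_hc2_id.
  - apply T_inv2_comp.
  - apply T_inv2_id.
  - apply T_asc_nat.
  - apply T_lu_nat.
  - apply T_ru_nat.
  - apply T_ev_nat.
  - apply T_co_nat.
  - apply T_pentagon.
  - apply T_triangle.
  - apply T_ev_co.
Qed.

End Transport.

Lemma RF3 {X : BgData} `{L : BgLaws X} {x y : b0 X} {e f g h k : b1 x y}
  (p : b2 h k) (q : b2 g h) (r : b2 f g) (s : b2 f k)
  (E : vc p (vc q r) = s) (d : b2 e f) : vc p (vc q (vc r d)) = vc s d.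
Proof. rewrite <- E. simp. reflexivity. Qed.

Section TMor.
Context {X C : BgData} `{L : BgLaws X} `{LC : BgLaws C}.
Variable hc' : forall x y z : b0 X, b1 y z -> b1 x y -> b1 x z.
Variable rh : forall (x y z : b0 X) (g : b1 y z) (f : b1 x y), b2 (hc g f) (hc' x y z g f).
Variable one' : forall x : b0 X, b1 x x.
Variable r0 : forall x : b0 X, b2 (one x) (one' x).
Variable inv' : forall x y : b0 X, b1 x y -> b1 y x.
Variable r1 : forall (x y : b0 X) (f : b1 x y), b2 (inv f) (inv' x y f).
Let T := TData hc' rh one' r0 inv' r1.

Definition TM (M : MorData X C) : MorData T C :=
  Build_MorData T C (F0 M) (fun x y f => F1 M f) (fun x y f g a => F2 M a)
    (fun x y z g f => vc (F2 M (rh _ _ _ g f)) (ph2 M g f))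
    (fun x => vc (F2 M (r0 x)) (ph0 M x))
    (fun x y f => vc (F2 M (r1 _ _ f)) (ph1 M f)).

Lemma TM_laws (M : MorData X C) `{LM : MorLaws X C M} : MorLaws (TM M).
Proof.
  constructor; simpl.
  - intros; apply FC; assumption.
  - intros; apply F1i; assumption.
  - intros. unfold t_hc2. rewrite !FC, FV by assumption. simp. rewrite phN by assumption. reflexivity.
  - intros. unfold t_inv2. rewrite !FC, FV by assumption. simp. rewrite ph1N by assumption. reflexivity.
  - intros. unfold t_asc. rewrite !FC, !FV by assumption. simp.
    rewrite (RF _ _ _ _ (phN _ _ _)). rewrite FV, F1i by assumption. rewrite <- hcC. simp.
    rewrite (mor_asc _ LM). simp. rewrite (RF _ _ _ _ (phN _ _ _)). rewrite ?FV, F1i by assumption.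
    rewrite hcM. simp. reflexivity.
  - intros. unfold t_ru. rewrite !FC, !FV by assumption. simp.
    rewrite (RF _ _ _ _ (phN _ _ _)). rewrite ?FV, F1i by assumption. rewrite <- hcC. simp.
    apply (mor_ru _ LM).
  - intros. unfold t_lu. rewrite !FC, !FV by assumption. simp.
    rewrite (RF _ _ _ _ (phN _ _ _)). rewrite ?FV, F1i by assumption. rewrite <- hcC. simp.
    apply (mor_lu _ LM).
  - intros. unfold t_ev. rewrite !FC, !FV by assumption. simp.
    rewrite (RF _ _ _ _ (phN _ _ _)). rewrite ?FV, F1i by assumption. rewrite <- hcC. simp.
    rewrite (mor_ev _ LM). simp. reflexivity.
  - intros. unfold t_co. rewrite !FC, !FV by assumption. simp.
    rewrite (mor_co _ LM). simp.
    rewrite (RF _ _ _ _ (phN _ _ _)). rewrite ?FV, F1i by assumption. rewrite hcM. simp. reflexivity.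
Qed.
End TMor.

Section TKMor.
Context {Z X : BgData} `{L : BgLaws X}.
Variable hc' : forall x y z : b0 X, b1 y z -> b1 x y -> b1 x z.
Variable rh : forall (x y z : b0 X) (g : b1 y z) (f : b1 x y), b2 (hc g f) (hc' x y z g f).
Variable one' : forall x : b0 X, b1 x x.
Variable r0 : forall x : b0 X, b2 (one x) (one' x).
Variable inv' : forall x y : b0 X, b1 x y -> b1 y x.
Variable r1 : forall (x y : b0 X) (f : b1 x y), b2 (inv f) (inv' x y f).
Let T := TData hc' rh one' r0 inv' r1.

Definition TK (K : MorData Z X) : MorData Z T :=
  Build_MorData Z T (F0 K) (fun x y f => F1 K f) (fun x y f g a => F2 K a)
    (fun x y z g f => vc (ph2 K g f) (vinv (rh _ _ _ (F1 K g) (F1 K f))))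
    (fun x => vc (ph0 K x) (vinv (r0 _)))
    (fun x y f => vc (ph1 K f) (vinv (r1 _ _ (F1 K f)))).

Lemma TK_laws (K : MorData Z X) `{LK : MorLaws Z X K} : MorLaws (TK K).
Proof.
  constructor; simpl.
  - intros; apply (F2_comp _ LK).
  - intros; apply (F2_id _ LK).
  - intros. unfold t_hc2. simp. rewrite (RF _ _ _ _ (ph2_nat _ LK _ _ _ _ _ _ _ b a)). reflexivity.
  - intros. unfold t_inv2. simp. rewrite (RF _ _ _ _ (ph1_nat _ LK _ _ _ _ a)). reflexivity.
  - intros. unfold t_hc2, t_asc. simp. rewrite hcSl. simp.
    rewrite (RF3 _ _ _ _ (mor_asc _ LK _ _ _ _ h g f)). simp. rewrite hcM. simp. reflexivity.
  - intros. unfold t_hc2, t_ru. simp. rewrite hcSr. simp.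
    rewrite (RF3 _ _ _ _ (mor_ru _ LK _ _ f)). reflexivity.
  - intros. unfold t_hc2, t_lu. simp. rewrite hcSl. simp.
    rewrite (RF3 _ _ _ _ (mor_lu _ LK _ _ f)). reflexivity.
  - intros. unfold t_hc2, t_ev. simp. rewrite hcSl. simp.
    rewrite (RF3 _ _ _ _ (mor_ev _ LK _ _ f)). simp. reflexivity.
  - intros. unfold t_hc2, t_co. simp.
    rewrite (RF1 _ _ _ (mor_co _ LK _ _ f)). simp. rewrite hcM. simp. reflexivity.
Qed.
End TKMor.

Ltac destr := repeat match goal with [ p : prod _ _ |- _ ] => destruct p end.

Section Prod.
Context {B D : BgData} `{LB : BgLaws B} `{LD : BgLaws D}.

Definition PData : BgData :=
  Build_BgData (b0 B * b0 D)
    (fun p q => (b1 (fst p) (fst q) * b1 (snd p) (snd q))%type)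
    (fun p q u v => (b2 (fst u) (fst v) * b2 (snd u) (snd v))%type)
    (fun p q u v w b a => (vc (fst b) (fst a), vc (snd b) (snd a)))
    (fun p q u => (vi (fst u), vi (snd u)))
    (fun p q u v a => (vinv (fst a), vinv (snd a)))
    (fun p q r g f => (hc (fst g) (fst f), hc (snd g) (snd f)))
    (fun p q r g g' f f' b a => (hc2 (fst b) (fst a), hc2 (snd b) (snd a)))
    (fun p => (one (fst p), one (snd p)))
    (fun p q f => (inv (fst f), inv (snd f)))
    (fun p q f g a => (inv2 (fst a), inv2 (snd a)))
    (fun p q r s h g f => (asc (fst h) (fst g) (fst f), asc (snd h) (snd g) (snd f)))
    (fun p q f => (lu (fst f), lu (snd f)))
    (fun p q f => (ru (fst f), ru (snd f)))
    (fun p q f => (ev (fst f), ev (snd f)))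
    (fun p q f => (co (fst f), co (snd f))).

Ltac pl law := intros; cbn in *; destr; simpl; f_equal; first [apply (law _ LB) | apply (law _ LD)].

Lemma PLaws : BgLaws PData.
Proof.
  constructor.
  - pl vc_assoc. - pl vc_idl. - pl vc_idr. - pl vinv_l. - pl vinv_r.
  - pl hc2_comp. - pl hc2_id. - pl inv2_comp. - pl inv2_id. - pl asc_nat.
  - pl lu_nat. - pl ru_nat. - pl ev_nat. - pl co_nat. - pl pentagon. - pl triangle. - pl ev_co.
Qed.

Definition Pfst : MorData PData B :=
  Build_MorData PData B (fun p => fst p) (fun p q u => fst u) (fun p q u v a => fst a)
    (fun p q r g f => vi (hc (fst g) (fst f))) (fun p => vi (one (fst p))) (fun p q f => vi (inv (fst f))).
Definition Psnd : MorData PData D :=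
  Build_MorData PData D (fun p => snd p) (fun p q u => snd u) (fun p q u v a => snd a)
    (fun p q r g f => vi (hc (snd g) (snd f))) (fun p => vi (one (snd p))) (fun p q f => vi (inv (snd f))).

Lemma Pfst_laws : MorLaws Pfst.
Proof. constructor; intros; simpl; rewrite ?hc11; simp; reflexivity. Qed.
Lemma Psnd_laws : MorLaws Psnd.
Proof. constructor; intros; simpl; rewrite ?hc11; simp; reflexivity. Qed.

Definition PK {Z : BgData} (R : MorData Z B) (P : MorData Z D) : MorData Z PData :=
  Build_MorData Z PData (fun x => (F0 R x, F0 P x)) (fun x y f => (F1 R f, F1 P f))
    (fun x y f g a => (F2 R a, F2 P a)) (fun x y z g f => (ph2 R g f, ph2 P g f))
    (fun x => (ph0 R x, ph0 P x)) (fun x y f => (ph1 R f, ph1 P f)).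

Lemma PK_laws {Z : BgData} (R : MorData Z B) (P : MorData Z D) `{LR : MorLaws _ _ R} `{LP : MorLaws _ _ P} :
  MorLaws (PK R P).
Proof.
  constructor; intros; simpl; f_equal.
  all: first [apply (F2_comp _ LR) | apply (F2_comp _ LP) | apply (F2_id _ LR) | apply (F2_id _ LP)
    | apply (ph2_nat _ LR) | apply (ph2_nat _ LP) | apply (ph1_nat _ LR) | apply (ph1_nat _ LP)
    | apply (mor_asc _ LR) | apply (mor_asc _ LP) | apply (mor_ru _ LR) | apply (mor_ru _ LP)
    | apply (mor_lu _ LR) | apply (mor_lu _ LP) | apply (mor_ev _ LR) | apply (mor_ev _ LP)
    | apply (mor_co _ LR) | apply (mor_co _ LP)].
Qed.

End Prod.

Section Sub.
Context {Y C : BgData} `{LY : BgLaws Y} `{LC : BgLaws C} (M N : MorData Y C)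
  `{LM : MorLaws _ _ M} `{LN : MorLaws _ _ N}.

Definition Q0 (x : b0 Y) : Prop := F0 M x = F0 N x.
Definition Q1 {x y : b0 Y} (f : b1 x y) : Prop := heq1 (F1 M f) (F1 N f).
Definition Q2 {x y : b0 Y} {f g : b1 x y} (a : b2 f g) : Prop := heq2 (F2 M a) (F2 N a).

Hypothesis Hhc : forall x y z (g : b1 y z) (f : b1 x y), Q1 g -> Q1 f -> heq2 (ph2 M g f) (ph2 N g f).
Hypothesis Hone : forall x, Q0 x -> heq2 (ph0 M x) (ph0 N x).
Hypothesis Hinv : forall x y (f : b1 x y), Q1 f -> heq2 (ph1 M f) (ph1 N f).

Lemma Q1_x {x y : b0 Y} (f : b1 x y) : Q1 f -> Q0 x.
Proof. apply heq1_x. Qed.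
Lemma Q1_y {x y : b0 Y} (f : b1 x y) : Q1 f -> Q0 y.
Proof. apply heq1_y. Qed.

Lemma cl_hc {x y z} (g : b1 y z) (f : b1 x y) : Q1 g -> Q1 f -> Q1 (hc g f).
Proof. intros. eapply heq2_tgt. apply Hhc; assumption. Qed.
Lemma cl_one x : Q0 x -> Q1 (one x).
Proof. intros. eapply heq2_tgt. apply Hone; assumption. Qed.
Lemma cl_inv {x y} (f : b1 x y) : Q1 f -> Q1 (inv f).
Proof. intros. eapply heq2_tgt. apply Hinv; assumption. Qed.
Lemma cl_vc {x y} {f g h : b1 x y} (b : b2 g h) (a : b2 f g) : Q2 b -> Q2 a -> Q2 (vc b a).
Proof. unfold Q2; intros. rewrite !FC by assumption. apply heq2_vc; assumption. Qed.
Lemma cl_vi {x y} (f : b1 x y) : Q1 f -> Q2 (vi f).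
Proof. unfold Q2; intros. rewrite !F1i by assumption. apply heq2_vi; assumption. Qed.
Lemma cl_vinv {x y} {f g : b1 x y} (a : b2 f g) : Q2 a -> Q2 (vinv a).
Proof. unfold Q2; intros. rewrite !FV by assumption. apply heq2_vinv; assumption. Qed.
Lemma cl_hc2 {x y z} {g g' : b1 y z} {f f' : b1 x y} (b : b2 g g') (a : b2 f f') :
  Q1 g -> Q1 g' -> Q1 f -> Q1 f' -> Q2 b -> Q2 a -> Q2 (hc2 b a).
Proof. unfold Q2; intros. rewrite !phN' by assumption.
  repeat apply heq2_vc; try apply heq2_vinv; try apply heq2_hc2; auto. Qed.
Lemma cl_inv2 {x y} {f g : b1 x y} (a : b2 f g) : Q1 f -> Q1 g -> Q2 a -> Q2 (inv2 a).
Proof. unfold Q2; intros. rewrite !ph1N' by assumption.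
  repeat apply heq2_vc; try apply heq2_vinv; try apply heq2_inv2; auto. Qed.
Lemma cl_asc {w x y z} (h : b1 y z) (g : b1 x y) (f : b1 w x) : Q1 h -> Q1 g -> Q1 f -> Q2 (asc h g f).
Proof. unfold Q2; intros. rewrite !ascF by assumption.
  repeat apply heq2_vc; try apply heq2_vinv; try apply heq2_hc2; try apply heq2_vi; try apply heq2_asc;
  try apply Hhc; auto using cl_hc. Qed.
Lemma cl_lu {x y} (f : b1 x y) : Q1 f -> Q2 (lu f).
Proof. unfold Q2; intros. rewrite !luF by assumption.
  repeat apply heq2_vc; try apply heq2_vinv; try apply heq2_hc2; try apply heq2_vi; try apply heq2_lu;
  try apply Hhc; try apply Hone; eauto using cl_one, Q1_y. Qed.
Lemma cl_ru {x y} (f : b1 x y) : Q1 f -> Q2 (ru f).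
Proof. unfold Q2; intros. rewrite !ruF by assumption.
  repeat apply heq2_vc; try apply heq2_vinv; try apply heq2_hc2; try apply heq2_vi; try apply heq2_ru;
  try apply Hhc; try apply Hone; eauto using cl_one, Q1_x. Qed.
Lemma cl_ev {x y} (f : b1 x y) : Q1 f -> Q2 (ev f).
Proof. unfold Q2; intros. rewrite !evF by assumption.
  repeat apply heq2_vc; try apply heq2_vinv; try apply heq2_hc2; try apply heq2_vi; try apply heq2_ev;
  try apply Hhc; try apply Hone; try apply Hinv; eauto using cl_inv, Q1_x. Qed.
Lemma cl_co {x y} (f : b1 x y) : Q1 f -> Q2 (co f).
Proof. unfold Q2; intros. rewrite !coF by assumption.
  repeat apply heq2_vc; try apply heq2_vinv; try apply heq2_hc2; try apply heq2_vi; try apply heq2_co;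
  try apply Hhc; try apply Hone; try apply Hinv; eauto using cl_inv, Q1_y. Qed.

Definition SData : BgData :=
  Build_BgData {x : b0 Y | Q0 x}
    (fun p q => {f : b1 (proj1_sig p) (proj1_sig q) | Q1 f})
    (fun p q u v => {a : b2 (proj1_sig u) (proj1_sig v) | Q2 a})
    (fun p q u v w b a => exist _ (vc (proj1_sig b) (proj1_sig a)) (cl_vc _ _ (proj2_sig b) (proj2_sig a)))
    (fun p q u => exist _ (vi (proj1_sig u)) (cl_vi _ (proj2_sig u)))
    (fun p q u v a => exist _ (vinv (proj1_sig a)) (cl_vinv _ (proj2_sig a)))
    (fun p q r g f => exist _ (hc (proj1_sig g) (proj1_sig f)) (cl_hc _ _ (proj2_sig g) (proj2_sig f)))
    (fun p q r g g' f f' b a => exist _ (hc2 (proj1_sig b) (proj1_sig a))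
        (cl_hc2 _ _ (proj2_sig g) (proj2_sig g') (proj2_sig f) (proj2_sig f') (proj2_sig b) (proj2_sig a)))
    (fun p => exist _ (one (proj1_sig p)) (cl_one _ (proj2_sig p)))
    (fun p q f => exist _ (inv (proj1_sig f)) (cl_inv _ (proj2_sig f)))
    (fun p q f g a => exist _ (inv2 (proj1_sig a)) (cl_inv2 _ (proj2_sig f) (proj2_sig g) (proj2_sig a)))
    (fun p q r s h g f => exist _ (asc (proj1_sig h) (proj1_sig g) (proj1_sig f))
        (cl_asc _ _ _ (proj2_sig h) (proj2_sig g) (proj2_sig f)))
    (fun p q f => exist _ (lu (proj1_sig f)) (cl_lu _ (proj2_sig f)))
    (fun p q f => exist _ (ru (proj1_sig f)) (cl_ru _ (proj2_sig f)))
    (fun p q f => exist _ (ev (proj1_sig f)) (cl_ev _ (proj2_sig f)))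
    (fun p q f => exist _ (co (proj1_sig f)) (cl_co _ (proj2_sig f))).

Ltac destrS := repeat match goal with [ p : sig _ |- _ ] => destruct p end.
Ltac sl law := intros; cbn in *; destrS; simpl; apply subset_eq_compat; apply (law _ LY).

Lemma SLaws : BgLaws SData.
Proof.
  constructor.
  - sl vc_assoc. - sl vc_idl. - sl vc_idr. - sl vinv_l. - sl vinv_r.
  - sl hc2_comp. - sl hc2_id. - sl inv2_comp. - sl inv2_id. - sl asc_nat.
  - sl lu_nat. - sl ru_nat. - sl ev_nat. - sl co_nat. - sl pentagon. - sl triangle. - sl ev_co.
Qed.

Definition SM {Z : BgData} (K : MorData Y Z) : MorData SData Z :=
  Build_MorData SData Z (fun p => F0 K (proj1_sig p)) (fun p q u => F1 K (proj1_sig u))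
    (fun p q u v a => F2 K (proj1_sig a))
    (fun p q r g f => ph2 K (proj1_sig g) (proj1_sig f))
    (fun p => ph0 K (proj1_sig p)) (fun p q f => ph1 K (proj1_sig f)).

Lemma SM_laws {Z : BgData} (K : MorData Y Z) `{LK : MorLaws _ _ K} : MorLaws (SM K).
Proof.
  constructor; intros; cbn in *; destrS; simpl.
  all: first [apply (F2_comp _ LK) | apply (F2_id _ LK) | apply (ph2_nat _ LK) | apply (ph1_nat _ LK)
    | apply (mor_asc _ LK) | apply (mor_ru _ LK) | apply (mor_lu _ LK) | apply (mor_ev _ LK)
    | apply (mor_co _ LK)].
Qed.

Section Co.
Context {W : BgData} (K : MorData W Y)
  (h0 : forall x, Q0 (F0 K x))
  (h1 : forall x y (f : b1 x y), Q1 (F1 K f))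
  (h2 : forall x y (f g : b1 x y) (a : b2 f g), Q2 (F2 K a))
  (h3 : forall x y z (g : b1 y z) (f : b1 x y), Q2 (ph2 K g f))
  (h4 : forall x, Q2 (ph0 K x))
  (h5 : forall x y (f : b1 x y), Q2 (ph1 K f)).

Definition CK : MorData W SData :=
  Build_MorData W SData (fun x => exist _ (F0 K x) (h0 x)) (fun x y f => exist _ (F1 K f) (h1 _ _ f))
    (fun x y f g a => exist _ (F2 K a) (h2 _ _ _ _ a))
    (fun x y z g f => exist _ (ph2 K g f) (h3 _ _ _ g f))
    (fun x => exist _ (ph0 K x) (h4 x)) (fun x y f => exist _ (ph1 K f) (h5 _ _ f)).

Lemma CK_laws `{LK : MorLaws _ _ K} : MorLaws CK.
Proof.
  constructor; intros; simpl; apply subset_eq_compat.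
  all: first [apply (F2_comp _ LK) | apply (F2_id _ LK) | apply (ph2_nat _ LK) | apply (ph1_nat _ LK)
    | apply (mor_asc _ LK) | apply (mor_ru _ LK) | apply (mor_lu _ LK) | apply (mor_ev _ LK)
    | apply (mor_co _ LK)].
Qed.
End Co.
End Sub.

Lemma mor_ext {A B : BgData} (M N : MorData A B) :
  (forall x, F0 M x = F0 N x) ->
  (forall x y (f : b1 x y), heq1 (F1 M f) (F1 N f)) ->
  (forall x y (f g : b1 x y) (a : b2 f g), heq2 (F2 M a) (F2 N a)) ->
  (forall x y z (g : b1 y z) (f : b1 x y), heq2 (ph2 M g f) (ph2 N g f)) ->
  (forall x, heq2 (ph0 M x) (ph0 N x)) ->
  (forall x y (f : b1 x y), heq2 (ph1 M f) (ph1 N f)) -> M = N.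
Proof.
  destruct M as [m0 m1 m2 p2 p0 p1], N as [n0 n1 n2 q2 q0 q1]; simpl; intros E0 E1 E2 E3 E4 E5.
  assert (m0 = n0) by (extensionality x; apply E0). subst n0.
  assert (m1 = n1). { extensionality x; extensionality y; extensionality f. apply heq1_eq, E1. } subst n1.
  assert (m2 = n2). { extensionality x; extensionality y; extensionality f; extensionality g;
    extensionality a. apply heq2_eq, E2. } subst n2.
  assert (p2 = q2). { extensionality x; extensionality y; extensionality z; extensionality g;
    extensionality f. apply heq2_eq, E3. } subst q2.
  assert (p0 = q0). { extensionality x. apply heq2_eq, E4. } subst q0.
  assert (p1 = q1). { extensionality x; extensionality y; extensionality f. apply heq2_eq, E5. } subst q1.
  reflexivity.
Qed.

Lemma mor_eq_inv {A B : BgData} (M N : MorData A B) : M = N ->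
  (forall x, F0 M x = F0 N x) /\
  (forall x y (f : b1 x y), heq1 (F1 M f) (F1 N f)) /\
  (forall x y (f g : b1 x y) (a : b2 f g), heq2 (F2 M a) (F2 N a)) /\
  (forall x y z (g : b1 y z) (f : b1 x y), heq2 (ph2 M g f) (ph2 N g f)) /\
  (forall x, heq2 (ph0 M x) (ph0 N x)) /\
  (forall x y (f : b1 x y), heq2 (ph1 M f) (ph1 N f)).
Proof. intros; subst; repeat split; reflexivity. Qed.

Lemma sig_ext {T : Type} {P : T -> Prop} (s t : sig P) : proj1_sig s = proj1_sig t -> s = t.
Proof. destruct s, t; simpl; intros; apply subset_eq_compat; assumption. Qed.

Section Lift.
Context {B C : BgData} `{LB : BgLaws B} `{LC : BgLaws C} (F : MorData B C) `{LF : MorLaws _ _ F}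
  (HF : is_fibration F).

Lemma lift {x y : b0 B} (a' : b1 x y) (s : b1 (F0 F x) (F0 F y)) (phi : b2 s (F1 F a'))
  {u v : b0 C} (s' t' : b1 u v) (gam : b2 s' t') :
  heq1 s s' -> exists c : b1 x y, exists r : b2 a' c, heq1 (F1 F c) t' /\ heq2 (vc (F2 F r) phi) gam.
Proof.
  intro H. inv1 H.
  destruct HF as [_ HF2].
  destruct (HF2 x y a' t' (vc phi (vinv gam))) as [a [p [alpha Ha]]].
  subst t'. simpl in Ha.
  exists a, (vinv alpha). split. reflexivity.
  apply heq2_of_eq. rewrite FV by assumption. rewrite Ha. rewrite vinvC, vinvK. simp. reflexivity.
Qed.
End Lift.

Section Main.
Context {B C D : BgData} `{LB : BgLaws B} `{LC : BgLaws C} `{LD : BgLaws D}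
  (F : MorData B C) `{LF : MorLaws _ _ F} (G : MorData D C) `{LG : MorLaws _ _ G}
  (HF : is_fibration F).

Definition Y0 : BgData := @PData B D.
Instance Y0laws : BgLaws Y0 := PLaws.

Lemma hc_ex (x y z : b0 Y0) (g : b1 y z) (f : b1 x y) :
  exists c : b1 (fst x) (fst z), exists r : b2 (hc (fst g) (fst f)) c,
    (heq1 (F1 F (fst g)) (F1 G (snd g)) -> heq1 (F1 F (fst f)) (F1 G (snd f)) ->
     heq2 (vc (F2 F r) (ph2 F (fst g) (fst f))) (ph2 G (snd g) (snd f))).
Proof.
  destruct (classic (heq1 (F1 F (fst g)) (F1 G (snd g)) /\ heq1 (F1 F (fst f)) (F1 G (snd f)))) as [[H1 H2]|Hn].
  - destruct (lift F HF (hc (fst g) (fst f)) _ (ph2 F (fst g) (fst f)) _ _ (ph2 G (snd g) (snd f))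
      (heq1_hc _ _ _ _ H1 H2)) as [c [r [_ Hr]]].
    exists c, r. intros; exact Hr.
  - exists (hc (fst g) (fst f)), (vi _). intros H1 H2. exfalso. apply Hn; split; assumption.
Qed.

Lemma one_ex (x : b0 Y0) :
  exists c : b1 (fst x) (fst x), exists r : b2 (one (fst x)) c,
    (F0 F (fst x) = F0 G (snd x) -> heq2 (vc (F2 F r) (ph0 F (fst x))) (ph0 G (snd x))).
Proof.
  destruct (classic (F0 F (fst x) = F0 G (snd x))) as [H1|Hn].
  - destruct (lift F HF (one (fst x)) _ (ph0 F (fst x)) _ _ (ph0 G (snd x))
      (heq1_one _ _ H1)) as [c [r [_ Hr]]].
    exists c, r. intros; exact Hr.
  - exists (one (fst x)), (vi _). intros H1. exfalso. apply Hn; assumption.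
Qed.

Lemma inv_ex (x y : b0 Y0) (f : b1 x y) :
  exists c : b1 (fst y) (fst x), exists r : b2 (inv (fst f)) c,
    (heq1 (F1 F (fst f)) (F1 G (snd f)) -> heq2 (vc (F2 F r) (ph1 F (fst f))) (ph1 G (snd f))).
Proof.
  destruct (classic (heq1 (F1 F (fst f)) (F1 G (snd f)))) as [H1|Hn].
  - destruct (lift F HF (inv (fst f)) _ (ph1 F (fst f)) _ _ (ph1 G (snd f))
      (heq1_inv _ _ H1)) as [c [r [_ Hr]]].
    exists c, r. intros; exact Hr.
  - exists (inv (fst f)), (vi _). intros H1. exfalso. apply Hn; assumption.
Qed.

Definition cB (x y z : b0 Y0) (g : b1 y z) (f : b1 x y) : b1 (fst x) (fst z) :=
  proj1_sig (constructive_indefinite_description _ (hc_ex x y z g f)).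
Definition rB (x y z : b0 Y0) (g : b1 y z) (f : b1 x y) : b2 (hc (fst g) (fst f)) (cB x y z g f) :=
  proj1_sig (constructive_indefinite_description _
    (proj2_sig (constructive_indefinite_description _ (hc_ex x y z g f)))).
Lemma rB_spec (x y z : b0 Y0) (g : b1 y z) (f : b1 x y) :
  heq1 (F1 F (fst g)) (F1 G (snd g)) -> heq1 (F1 F (fst f)) (F1 G (snd f)) ->
  heq2 (vc (F2 F (rB x y z g f)) (ph2 F (fst g) (fst f))) (ph2 G (snd g) (snd f)).
Proof. exact (proj2_sig (constructive_indefinite_description _
    (proj2_sig (constructive_indefinite_description _ (hc_ex x y z g f))))). Qed.

Definition c0 (x : b0 Y0) : b1 (fst x) (fst x) :=
  proj1_sig (constructive_indefinite_description _ (one_ex x)).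
Definition r0B (x : b0 Y0) : b2 (one (fst x)) (c0 x) :=
  proj1_sig (constructive_indefinite_description _
    (proj2_sig (constructive_indefinite_description _ (one_ex x)))).
Lemma r0B_spec (x : b0 Y0) :
  F0 F (fst x) = F0 G (snd x) -> heq2 (vc (F2 F (r0B x)) (ph0 F (fst x))) (ph0 G (snd x)).
Proof. exact (proj2_sig (constructive_indefinite_description _
    (proj2_sig (constructive_indefinite_description _ (one_ex x))))). Qed.

Definition c1 (x y : b0 Y0) (f : b1 x y) : b1 (fst y) (fst x) :=
  proj1_sig (constructive_indefinite_description _ (inv_ex x y f)).
Definition r1B (x y : b0 Y0) (f : b1 x y) : b2 (inv (fst f)) (c1 x y f) :=
  proj1_sig (constructive_indefinite_description _
    (proj2_sig (constructive_indefinite_description _ (inv_ex x y f)))).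
Lemma r1B_spec (x y : b0 Y0) (f : b1 x y) :
  heq1 (F1 F (fst f)) (F1 G (snd f)) -> heq2 (vc (F2 F (r1B x y f)) (ph1 F (fst f))) (ph1 G (snd f)).
Proof. exact (proj2_sig (constructive_indefinite_description _
    (proj2_sig (constructive_indefinite_description _ (inv_ex x y f))))). Qed.

Definition hcY (x y z : b0 Y0) (g : b1 y z) (f : b1 x y) : b1 x z :=
  (cB x y z g f, hc (snd g) (snd f)).
Definition rhY (x y z : b0 Y0) (g : b1 y z) (f : b1 x y) : b2 (hc g f) (hcY x y z g f) :=
  (rB x y z g f, vi (hc (snd g) (snd f))).
Definition oneY (x : b0 Y0) : b1 x x := (c0 x, one (snd x)).
Definition r0Y (x : b0 Y0) : b2 (one x) (oneY x) := (r0B x, vi (one (snd x))).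
Definition invY (x y : b0 Y0) (f : b1 x y) : b1 y x := (c1 x y f, inv (snd f)).
Definition r1Y (x y : b0 Y0) (f : b1 x y) : b2 (inv f) (invY x y f) := (r1B x y f, vi (inv (snd f))).

Definition T0 := TData hcY rhY oneY r0Y invY r1Y.
Instance T0laws : BgLaws T0 := TLaws hcY rhY oneY r0Y invY r1Y.

Definition NF : MorData Y0 C :=
  Build_MorData Y0 C (fun p => F0 F (fst p)) (fun p q u => F1 F (fst u)) (fun p q u v a => F2 F (fst a))
    (fun p q r g f => ph2 F (fst g) (fst f)) (fun p => ph0 F (fst p)) (fun p q f => ph1 F (fst f)).
Definition NG : MorData Y0 C :=
  Build_MorData Y0 C (fun p => F0 G (snd p)) (fun p q u => F1 G (snd u)) (fun p q u v a => F2 G (snd a))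
    (fun p q r g f => ph2 G (snd g) (snd f)) (fun p => ph0 G (snd p)) (fun p q f => ph1 G (snd f)).

Instance NF_laws : MorLaws NF.
Proof.
  constructor; intros; simpl.
  all: first [apply (F2_comp _ LF) | apply (F2_id _ LF) | apply (ph2_nat _ LF) | apply (ph1_nat _ LF)
    | apply (mor_asc _ LF) | apply (mor_ru _ LF) | apply (mor_lu _ LF) | apply (mor_ev _ LF)
    | apply (mor_co _ LF)].
Qed.
Instance NG_laws : MorLaws NG.
Proof.
  constructor; intros; simpl.
  all: first [apply (F2_comp _ LG) | apply (F2_id _ LG) | apply (ph2_nat _ LG) | apply (ph1_nat _ LG)
    | apply (mor_asc _ LG) | apply (mor_ru _ LG) | apply (mor_lu _ LG) | apply (mor_ev _ LG)
    | apply (mor_co _ LG)].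
Qed.

Definition MF : MorData T0 C := TM hcY rhY oneY r0Y invY r1Y NF.
Definition MG : MorData T0 C := TM hcY rhY oneY r0Y invY r1Y NG.
Instance MF_laws : MorLaws MF := TM_laws hcY rhY oneY r0Y invY r1Y NF.
Instance MG_laws : MorLaws MG := TM_laws hcY rhY oneY r0Y invY r1Y NG.

Lemma Hhc0 : forall (x y z : b0 T0) (g : b1 y z) (f : b1 x y),
  Q1 MF MG g -> Q1 MF MG f -> heq2 (ph2 MF g f) (ph2 MG g f).
Proof.
  intros x y z g f H1 H2. unfold Q1 in *. simpl in *.
  rewrite (F1i G), vc1l. apply rB_spec; assumption.
Qed.
Lemma Hone0 : forall x : b0 T0, Q0 MF MG x -> heq2 (ph0 MF x) (ph0 MG x).
Proof.
  intros x H1. unfold Q0 in *. simpl in *.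
  rewrite (F1i G), vc1l. apply r0B_spec; assumption.
Qed.
Lemma Hinv0 : forall (x y : b0 T0) (f : b1 x y), Q1 MF MG f -> heq2 (ph1 MF f) (ph1 MG f).
Proof.
  intros x y f H1. unfold Q1 in *. simpl in *.
  rewrite (F1i G), vc1l. apply r1B_spec; assumption.
Qed.

Definition A0 : BgData := SData MF MG Hhc0 Hone0 Hinv0.
Instance A0laws : BgLaws A0 := SLaws MF MG Hhc0 Hone0 Hinv0.


Instance Pfst_i : MorLaws (@Pfst B D) := Pfst_laws.
Instance Psnd_i : MorLaws (@Psnd B D) := Psnd_laws.

Definition R0 : MorData A0 B :=
  SM MF MG Hhc0 Hone0 Hinv0 (TM hcY rhY oneY r0Y invY r1Y (@Pfst B D)).
Definition P0 : MorData A0 D :=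
  SM MF MG Hhc0 Hone0 Hinv0 (TM hcY rhY oneY r0Y invY r1Y (@Psnd B D)).

Lemma R0_laws : MorLaws R0.
Proof. unfold R0. apply SM_laws. apply TM_laws. apply Pfst_laws. Qed.
Lemma P0_laws : MorLaws P0.
Proof. unfold P0. apply SM_laws. apply TM_laws. apply Psnd_laws. Qed.

Lemma P0_strict : strict P0.
Proof.
  split; [|split]; intros; exists eq_refl; simpl; apply vc1l.
Qed.

Lemma comm0 : mcomp F R0 = mcomp G P0.
Proof.
  apply mor_ext; intros; simpl.
  - exact (proj2_sig x).
  - exact (proj2_sig f).
  - exact (proj2_sig a).
  - rewrite !vc1r, (F1i G), vc1l. apply rB_spec; [exact (proj2_sig g) | exact (proj2_sig f)].
  - rewrite !vc1r, (F1i G), vc1l. apply r0B_spec. exact (proj2_sig x).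
  - rewrite !vc1r, (F1i G), vc1l. apply r1B_spec. exact (proj2_sig f).
Qed.

Section Univ.
Context {X : BgData} `{LX : BgLaws X} (R' : MorData X B) (P' : MorData X D)
  `{LR : MorLaws _ _ R'} `{LP : MorLaws _ _ P'} (E : mcomp F R' = mcomp G P').

Let K := PK R' P'.
Let TKK : MorData X T0 := TK hcY rhY oneY r0Y invY r1Y K.

Lemma uh0 : forall x, Q0 MF MG (F0 TKK x).
Proof. intros. destruct (mor_eq_inv _ _ E) as [e0 _]. exact (e0 x). Qed.
Lemma uh1 : forall x y (f : b1 x y), Q1 MF MG (F1 TKK f).
Proof. intros. destruct (mor_eq_inv _ _ E) as [_ [e1 _]]. exact (e1 x y f). Qed.
Lemma uh2 : forall x y (f g : b1 x y) (a : b2 f g), Q2 MF MG (F2 TKK a).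
Proof. intros. destruct (mor_eq_inv _ _ E) as [_ [_ [e2 _]]]. exact (e2 x y f g a). Qed.
Lemma uh3 : forall x y z (g : b1 y z) (f : b1 x y), Q2 MF MG (ph2 TKK g f).
Proof.
  intros. destruct (mor_eq_inv _ _ E) as [e0 [e1 [e2 [e3 [e4 e5]]]]]. simpl in *.
  unfold Q2. simpl.
  rewrite (FC F), (FV F), vinv1, vc1r.
  assert (EQ1 : vc (F2 F (ph2 R' g f)) (vinv (F2 F (rB (F0 K x) (F0 K y) (F0 K z) (F1 K g) (F1 K f))))
    = vc (vc (F2 F (ph2 R' g f)) (ph2 F (F1 R' g) (F1 R' f)))
         (vinv (vc (F2 F (rB (F0 K x) (F0 K y) (F0 K z) (F1 K g) (F1 K f))) (ph2 F (F1 R' g) (F1 R' f))))).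
  { rewrite vinvC. simp. reflexivity. }
  simpl in EQ1. rewrite EQ1.
  assert (EQ2 : F2 G (ph2 P' g f) = vc (vc (F2 G (ph2 P' g f)) (ph2 G (F1 P' g) (F1 P' f)))
     (vinv (ph2 G (F1 P' g) (F1 P' f)))).
  { simp. reflexivity. }
  rewrite EQ2.
  apply heq2_vc; [apply e3 | apply heq2_vinv].
  apply (rB_spec (F0 K x) (F0 K y) (F0 K z) (F1 K g) (F1 K f)); [apply e1 | apply e1].
Qed.
Lemma uh4 : forall x, Q2 MF MG (ph0 TKK x).
Proof.
  intros. destruct (mor_eq_inv _ _ E) as [e0 [e1 [e2 [e3 [e4 e5]]]]]. simpl in *.
  unfold Q2. simpl.
  rewrite (FC F), (FV F), vinv1, vc1r.
  assert (EQ1 : vc (F2 F (ph0 R' x)) (vinv (F2 F (r0B (F0 K x))))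
    = vc (vc (F2 F (ph0 R' x)) (ph0 F (F0 R' x)))
         (vinv (vc (F2 F (r0B (F0 K x))) (ph0 F (F0 R' x))))).
  { rewrite vinvC. simp. reflexivity. }
  simpl in EQ1. rewrite EQ1.
  assert (EQ2 : F2 G (ph0 P' x) = vc (vc (F2 G (ph0 P' x)) (ph0 G (F0 P' x)))
     (vinv (ph0 G (F0 P' x)))).
  { simp. reflexivity. }
  rewrite EQ2.
  apply heq2_vc; [apply e4 | apply heq2_vinv].
  apply (r0B_spec (F0 K x)); apply e0.
Qed.
Lemma uh5 : forall x y (f : b1 x y), Q2 MF MG (ph1 TKK f).
Proof.
  intros. destruct (mor_eq_inv _ _ E) as [e0 [e1 [e2 [e3 [e4 e5]]]]]. simpl in *.
  unfold Q2. simpl.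
  rewrite (FC F), (FV F), vinv1, vc1r.
  assert (EQ1 : vc (F2 F (ph1 R' f)) (vinv (F2 F (r1B (F0 K x) (F0 K y) (F1 K f))))
    = vc (vc (F2 F (ph1 R' f)) (ph1 F (F1 R' f)))
         (vinv (vc (F2 F (r1B (F0 K x) (F0 K y) (F1 K f))) (ph1 F (F1 R' f))))).
  { rewrite vinvC. simp. reflexivity. }
  simpl in EQ1. rewrite EQ1.
  assert (EQ2 : F2 G (ph1 P' f) = vc (vc (F2 G (ph1 P' f)) (ph1 G (F1 P' f)))
     (vinv (ph1 G (F1 P' f)))).
  { simp. reflexivity. }
  rewrite EQ2.
  apply heq2_vc; [apply e5 | apply heq2_vinv].
  apply (r1B_spec (F0 K x) (F0 K y) (F1 K f)); apply e1.
Qed.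

Definition H0 : MorData X A0 := CK MF MG Hhc0 Hone0 Hinv0 TKK uh0 uh1 uh2 uh3 uh4 uh5.

Lemma H0_laws : MorLaws H0.
Proof. unfold H0. apply CK_laws. apply TK_laws. apply PK_laws; assumption. Qed.

Lemma H0_R : mcomp R0 H0 = R'.
Proof.
  apply mor_ext; intros; simpl; try reflexivity; apply heq2_of_eq; simp; reflexivity.
Qed.
Lemma H0_P : mcomp P0 H0 = P'.
Proof.
  apply mor_ext; intros; simpl; try reflexivity; apply heq2_of_eq; rewrite ?vinv1; simp; reflexivity.
Qed.

Lemma solve_l {Z : BgData} `{LZ : BgLaws Z} {x y : b0 Z} {f g h : b1 x y} (X0 : b2 g h) (Y : b2 f g) (W : b2 f h) :
  vc X0 Y = W -> X0 = vc W (vinv Y).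
Proof. intros E0. subst W. simp. reflexivity. Qed.

Lemma H0_uniq (H' : MorData X A0) : mcomp R0 H' = R' -> mcomp P0 H' = P' -> H' = H0.
Proof.
  intros E1 E2.
  destruct (mor_eq_inv _ _ E1) as [a0 [a1 [a2 [a3 [a4 a5]]]]].
  destruct (mor_eq_inv _ _ E2) as [b0' [b1' [b2' [b3' [b4' b5']]]]].
  clear E1 E2.
  destruct H' as [h0 h1 h2 q2 q0 q1]. simpl in *.
  assert (h0 = F0 H0).
  { extensionality x. apply sig_ext. simpl. apply injective_projections; simpl; auto. }
  subst h0.
  assert (h1 = @F1 _ _ H0).
  { extensionality x; extensionality y; extensionality f. apply sig_ext.
    apply injective_projections; simpl; apply heq1_eq; first [apply a1 | apply b1']. }
  subst h1.
  assert (h2 = @F2 _ _ H0).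
  { extensionality x; extensionality y; extensionality f; extensionality g; extensionality a.
    apply sig_ext. apply injective_projections; simpl; apply heq2_eq; first [apply a2 | apply b2']. }
  subst h2.
  assert (q2 = @ph2 _ _ H0).
  { extensionality x; extensionality y; extensionality z; extensionality g; extensionality f.
    apply sig_ext. apply injective_projections; simpl.
    - specialize (a3 x y z g f). simpl in a3. apply heq2_eq in a3.
      rewrite (solve_l _ _ _ a3). rewrite ?vinvC, ?vinv1. simp. reflexivity.
    - specialize (b3' x y z g f). simpl in b3'. apply heq2_eq in b3'.
      rewrite (solve_l _ _ _ b3'). rewrite ?vinvC, ?vinv1. simp. reflexivity. }
  subst q2.
  assert (q0 = ph0 H0).
  { extensionality x.
    apply sig_ext. apply injective_projections; simpl.
    - specialize (a4 x). simpl in a4. apply heq2_eq in a4.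
      rewrite (solve_l _ _ _ a4). rewrite ?vinvC, ?vinv1. simp. reflexivity.
    - specialize (b4' x). simpl in b4'. apply heq2_eq in b4'.
      rewrite (solve_l _ _ _ b4'). rewrite ?vinvC, ?vinv1. simp. reflexivity. }
  subst q0.
  assert (q1 = @ph1 _ _ H0).
  { extensionality x; extensionality y; extensionality f.
    apply sig_ext. apply injective_projections; simpl.
    - specialize (a5 x y f). simpl in a5. apply heq2_eq in a5.
      rewrite (solve_l _ _ _ a5). rewrite ?vinvC, ?vinv1. simp. reflexivity.
    - specialize (b5' x y f). simpl in b5'. apply heq2_eq in b5'.
      rewrite (solve_l _ _ _ b5'). rewrite ?vinvC, ?vinv1. simp. reflexivity. }
  subst q1.
  reflexivity.
Qed.

End Univ.
End Main.

#[local] Existing Instance blaws.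

Theorem lemma5p7 (B C D : Bigroupoid) (F : MorData B C) (G : MorData D C) :
  MorLaws F -> is_fibration F -> MorLaws G ->
  exists (A : Bigroupoid) (R : MorData A B) (P : MorData A D),
    MorLaws R /\ MorLaws P /\ strict P /\
    mcomp F R = mcomp G P /\
    (forall (X : Bigroupoid) (R' : MorData X B) (P' : MorData X D),
        MorLaws R' -> MorLaws P' -> mcomp F R' = mcomp G P' ->
        exists H : MorData X A,
          MorLaws H /\ mcomp R H = R' /\ mcomp P H = P' /\
          (forall H' : MorData X A,
              MorLaws H' -> mcomp R H' = R' -> mcomp P H' = P' -> H' = H)).
Proof.
  intros LF HF LG.
  exists (Build_Bigroupoid (A0 F G HF) (A0laws F G HF)), (R0 F G HF), (P0 F G HF).
  split; [exact (R0_laws F G HF)|]. split; [exact (P0_laws F G HF)|].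
  split; [exact (P0_strict F G HF)|].
  split; [exact (comm0 F G HF)|].
  intros X R' P' LR LP E.
  exists (H0 F G HF R' P' E). split; [exact (H0_laws F G HF R' P' E)|].
  split; [exact (H0_R F G HF R' P' E)|]. split; [exact (H0_P F G HF R' P' E)|].
  intros H' _ E1 E2. exact (H0_uniq F G HF R' P' E H' E1 E2).
Qed.
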